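(* Let $X$ be a discrete metric space. There exists an approximate unit for the ideal $C_0(X\times X;\Delta)\subseteq \ell^\infty(X\times X)$ consisting of positive definite functions if and only if there exists a metrically proper function of negative type on $X\times X$.
   Context: Let $(X,d)$ be a metric space with the discrete topology. A function $f:X\times X\to\mathbb{C}$ is positive definite if for every $n\ge1$, all $x_1,\dots,x_n\in X$ and all $z_1,\dots,z_n\in\mathbb{C}$ one has $\sum_{i,j}\overline{z_i}\,f(x_i,x_j)\,z_j\ge 0$. A function $h:X\times X\to\mathbb{R}$ is of negative type if (a) $h(x,x)=0$ for all $x$; (b) $h(x,y)=h(y,x)$ for all $x,y$; (c) $\sum_{i,j}a_i h(x_i,x_j)a_j\le 0$ for all $n$, all $x_1,\dots,x_n\in X$ and all $a_1,\dots,a_n\in\mathbb{R}$ with $\sum_j a_j=0$. A function $f:X\times X\to\mathbb{C}$ is metrically proper if (a) for every $R>0$, $\sup\{|f(x,y)|: d(x,y)\le R\}<\infty$, and (b) for every $C>0$ there is $R>0$ such that $|f(x,y)|>C$ whenever $d(x,y)>R$. Let $\Delta$ be the diagonal of $X\times X$ and $C_0(X\times X;\Delta)$ the set of bounded functions $f$ on $X\times X$ such that for every $\epsilon>0$ there is $R>0$ with $|f(x,y)|<\epsilon$ whenever $d(x,y)>R$; it is an ideal in the $C^*$-algebra $\ell^\infty(X\times X)$ (sup norm). An approximate unit for $C_0(X\times X;\Delta)$ is a net $(u_\lambda)$ of elements of $C_0(X\times X;\Delta)$ such that $\|u_\lambda f-f\|_\infty\to0$ for every $f\in C_0(X\times X;\Delta)$;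 equivalently (for bounded nets), $u_\lambda\to1$ uniformly on each set $B_\Delta(R)=\{(x,y):d(x,y)<R\}$. *)

(* Defs.v *)
From HB Require Import structures.
From mathcomp Require Import all_boot all_order all_algebra.
From mathcomp Require Import complex.
From mathcomp Require Import reals.
Set Implicit Arguments. Unset Strict Implicit. Unset Printing Implicit Defensive.
Import Order.TTheory GRing.Theory Num.Theory.
Local Open Scope ring_scope.
Local Open Scope complex_scope.

Section Defs.
Variable R : realType.
Local Notation C := R[i].

Definition is_metric (X : Type) (d : X -> X -> R) : Prop :=
  (forall x y, 0 <= d x y) /\
  (forall x y, d x y = 0 <-> x = y) /\
  (forall x y, d x y = d y x) /\
  (forall x y z, d x z <= d x y + d y z).

Definition positive_definite (X : Type) (f : X -> X -> C) : Prop :=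
  forall (n : nat) (x : 'I_n -> X) (z : 'I_n -> C),
    0 <= \sum_(i < n) \sum_(j < n) (z i)^* * f (x i) (x j) * z j.

Definition negative_type (X : Type) (h : X -> X -> R) : Prop :=
  (forall x, h x x = 0) /\
  (forall x y, h x y = h y x) /\
  (forall (n : nat) (x : 'I_n -> X) (a : 'I_n -> R),
     \sum_(j < n) a j = 0 ->
     \sum_(i < n) \sum_(j < n) a i * h (x i) (x j) * a j <= 0).

Definition metrically_proper (X : Type) (d : X -> X -> R) (f : X -> X -> C) : Prop :=
  (forall r : R, 0 < r -> exists M : R,
      forall x y, d x y <= r -> `|f x y| <= M%:C) /\
  (forall c : R, 0 < c -> exists r : R, 0 < r /\
      forall x y, r < d x y -> c%:C < `|f x y|).

Definition C0_diag (X : Type) (d : X -> X -> R) (f : X -> X -> C) : Prop :=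
  (exists M : R, forall x y, `|f x y| <= M%:C) /\
  (forall eps : R, 0 < eps -> exists r : R, 0 < r /\
      forall x y, r < d x y -> `|f x y| < eps%:C).

Definition directed (I : Type) (le : I -> I -> Prop) : Prop :=
  inhabited I /\
  (forall i, le i i) /\
  (forall i j k, le i j -> le j k -> le i k) /\
  (forall i j, exists k, le i k /\ le j k).

Definition has_pd_approx_unit (X : Type) (d : X -> X -> R) : Prop :=
  exists (I : Type) (le : I -> I -> Prop) (u : I -> X -> X -> C),
    directed le /\
    (forall i, C0_diag d (u i) /\ positive_definite (u i)) /\
    (forall f, C0_diag d f ->
       forall eps : R, 0 < eps -> exists i0, forall i, le i0 i ->
         forall x y, `|u i x y * f x y - f x y| <= eps%:C).
End Defs.

(* Main.v *)
Require Import Defs.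
From HB Require Import structures.
From mathcomp Require Import all_boot all_order all_algebra.
From mathcomp Require Import complex.
From mathcomp Require Import reals.
From mathcomp Require Import ring lra.
From mathcomp Require Import boolp classical_sets topology normedtype sequences exp.
Import Order.TTheory GRing.Theory Num.Theory.
From mathcomp Require Import complex.
Set Implicit Arguments. Unset Strict Implicit. Unset Printing Implicit Defensive.
Local Open Scope ring_scope.
Local Open Scope classical_set_scope.

Section Kernels.
Variable R : realFieldType.
Variable X : Type.

Definition Qf (K : X -> X -> R) n (x : 'I_n -> X) (a : 'I_n -> R) :=
  \sum_(i < n) \sum_(j < n) a i * K (x i) (x j) * a j.
Definition rpd K := forall n x a, 0 <= @Qf K n x a.
Definition symk (K : X -> X -> R) := forall p q, K p q = K q p.

Definition ext (T : Type) n (x0 : T) (y : 'I_n -> T) : 'I_n.+1 -> T :=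
  fun i => if unlift ord0 i is Some j then y j else x0.

Lemma ext0 T n (x0 : T) y : @ext T n x0 y ord0 = x0.
Proof.
rewrite /ext; case: unliftP => [j' Hj|//].
by move/eqP: Hj; rewrite (negbTE (neq_lift _ _)).
Qed.
Lemma extS T n (x0 : T) y j : @ext T n x0 y (lift ord0 j) = y j.
Proof.
rewrite /ext; case: unliftP => [j' /lift_inj->//|/eqP].
by rewrite eq_sym (negbTE (neq_lift _ _)).
Qed.

Lemma Q_ext K n x0 y c b : Qf K (@ext X n x0 y) (ext c b) =
  c * K x0 x0 * c + \sum_(j < n) c * K x0 (y j) * b j
  + \sum_(i < n) b i * K (y i) x0 * c + Qf K y b.
Proof.
rewrite /Qf big_ord_recl big_ord_recl !ext0.
under eq_bigr do rewrite !extS.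
under [X in _ + X]eq_bigr do rewrite big_ord_recl !extS !ext0.
under [X in _ + X]eq_bigr do under eq_bigr do rewrite !extS.
by rewrite big_split /= !addrA.
Qed.


Lemma ext_eta T n (f : 'I_n.+1 -> T) i : ext (f ord0) (fun j => f (lift ord0 j)) i = f i.
Proof.
rewrite /ext; case: unliftP => [j' ->//|->//].
Qed.

Lemma Qf_ext K n (x : 'I_n.+1 -> X) a :
  Qf K x a = Qf K (ext (x ord0) (fun j => x (lift ord0 j)))
                  (ext (a ord0) (fun j => a (lift ord0 j))).
Proof. by apply: eq_bigr => i _; apply: eq_bigr => j _; rewrite !ext_eta. Qed.

Lemma Qf_eq K L n (x : 'I_n -> X) a : (forall p q, K p q = L p q) -> Qf K x a = Qf L x a.
Proof. by move=> E; apply: eq_bigr => i _; apply: eq_bigr => j _; rewrite E. Qed.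

Lemma Qf_add K L n (x : 'I_n -> X) a :
  Qf (fun p q => K p q + L p q) x a = Qf K x a + Qf L x a.
Proof.
rewrite /Qf -big_split; apply: eq_bigr => i _; rewrite -big_split.
by apply: eq_bigr => j _ /=; ring.
Qed.

Lemma Qf_scale c K n (x : 'I_n -> X) a :
  Qf (fun p q => c * K p q) x a = c * Qf K x a.
Proof.
rewrite /Qf mulr_sumr; apply: eq_bigr => i _; rewrite mulr_sumr.
by apply: eq_bigr => j _ /=; ring.
Qed.

Lemma Qf_mulf K (f : X -> R) n (x : 'I_n -> X) a :
  Qf (fun p q => K p q * (f p * f q)) x a = Qf K x (fun i => a i * f (x i)).
Proof. by apply: eq_bigr => i _; apply: eq_bigr => j _ /=; ring. Qed.

Lemma Qf_rank1 (f : X -> R) n (x : 'I_n -> X) a :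
  Qf (fun p q => f p * f q) x a = (\sum_(i < n) a i * f (x i)) ^+ 2.
Proof.
rewrite expr2 big_distrl; apply: eq_bigr => i _; rewrite big_distrr.
by apply: eq_bigr => j _ /=; ring.
Qed.

Lemma Qf0 K (x : 'I_0 -> X) a : Qf K x a = 0.
Proof. by rewrite /Qf big_ord0. Qed.

Lemma Qf1 K (x : 'I_1 -> X) a : Qf K x a = a ord0 * K (x ord0) (x ord0) * a ord0.
Proof. by rewrite /Qf big_ord1 big_ord1. Qed.

Lemma rpd_diag K p : rpd K -> 0 <= K p p.
Proof.
move=> H; have := H 1%N (fun _ => p) (fun _ => 1).
by rewrite Qf1 mul1r mulr1.
Qed.

Lemma rpd_cs K p q : rpd K -> symk K -> K p p = 0 -> K p q = 0.
Proof.
move=> H S Hp.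
have key : forall t, 0 <= t * (2 * K p q) + K q q.
  move=> t; have := H 2%N (ext p (fun _ : 'I_1 => q)) (ext t (fun _ => 1)).
  rewrite Q_ext Qf1 Hp !big_ord1 (S q p).
  by move=> h; apply: le_trans h _; rewrite le_eqVlt; apply/orP; left; apply/eqP; ring.
apply/eqP; apply/negPn/negP => Hne.
have Hne2 : 2 * K p q != 0 by rewrite mulf_neq0 // pnatr_eq0.
have := key (- (K q q + 1) / (2 * K p q)).
rewrite divfK //; lra.
Qed.

Lemma schur n : forall K L, rpd K -> rpd L -> symk L ->
  forall (x : 'I_n -> X) a, 0 <= Qf (fun p q => K p q * L p q) x a.
Proof.
elim: n => [|n IH] K L HK HL SL x a; first by rewrite Qf0.
rewrite Qf_ext.
set x0 := x ord0; set y := fun j => x (lift ord0 j).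
set c := a ord0; set b := fun j => a (lift ord0 j).
set l0 := L x0 x0.
pose L' := fun p q => L p q - L p x0 * L x0 q / l0.
have l0ge : 0 <= l0 by apply: rpd_diag.
have SL' : symk L' by move=> p q; rewrite /L' SL (SL p x0) (SL x0 q); ring.
have L'0 : forall q, L' x0 q = 0.
  move=> q; rewrite /L'; have [l00|l0n] := eqVneq l0 0.
    by rewrite (rpd_cs q HL SL l00); ring.
  by rewrite -/l0 mulrAC divff // mul1r subrr.
have L'0' : forall q, L' q x0 = 0 by move=> q; rewrite SL'.
have HL' : rpd L'.
  move=> m y' b'; have [l00|l0n] := eqVneq l0 0.
    rewrite (@Qf_eq L' L) ?HL // => p q; rewrite /L' -/l0 l00 invr0; ring.
  set S := \sum_(j < m) b' j * L x0 (y' j).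
  have := HL m.+1 (ext x0 y') (ext (- S / l0) b').
  rewrite Q_ext.
  have E1 : \sum_(j < m) - S / l0 * L x0 (y' j) * b' j = - S / l0 * S.
    by rewrite /S mulr_sumr; apply: eq_bigr => j _; ring.
  have E2 : \sum_(i < m) b' i * L (y' i) x0 * (- S / l0) = - S / l0 * S.
    by rewrite /S mulr_sumr; apply: eq_bigr => j _; rewrite SL; ring.
  rewrite E1 E2.
  have E3 : Qf L y' b' = Qf L' y' b' + l0^-1 * S ^+ 2.
    rewrite -(Qf_rank1 (fun p => L x0 p)) -Qf_scale -Qf_add.
    apply: Qf_eq => p q; rewrite /L' (SL p x0); ring.
  rewrite E3 -/l0 => h; apply: le_trans h _; rewrite le_eqVlt; apply/orP; left.
  by apply/eqP; field.
have dec : forall p q, K p q * L p q =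
    K p q * L' p q + l0^-1 * (K p q * (L p x0 * L q x0)).
  by move=> p q; rewrite /L' (SL x0 q); ring.
rewrite (Qf_eq _ _ dec) Qf_add Qf_scale Qf_mulf.
apply: addr_ge0; last by apply: mulr_ge0; [rewrite invr_ge0|apply: HK].
rewrite Q_ext L'0 !mulr0 mul0r add0r.
rewrite big1 ?add0r; last by move=> j _; rewrite L'0 !mulr0 mul0r.
rewrite big1 ?add0r; last by move=> j _; rewrite L'0' !mulr0 mul0r.
exact: IH.
Qed.

End Kernels.

Section Lim.
Variable R : realType.
Variable X : Type.

Lemma Qf_cvg (K : X -> X -> R) (S : nat -> X -> X -> R) n (x : 'I_n -> X) a :
  (forall p q, (fun N => S N p q) @ \oo --> (K p q : R^o)) ->
  (fun N => Qf (S N) x a) @ \oo --> (Qf K x a : R^o).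
Proof.
move=> H; rewrite /Qf.
apply: (@cvg_big R^o _ +%R 0 xpredT (@add_continuous _)) => i _.
apply: (@cvg_big R^o _ +%R 0 xpredT (@add_continuous _)) => j _.
apply: cvgMr_tmp; apply: cvgMl_tmp; exact: H.
Qed.


Lemma ser_cvg (y : R) : (series (exp_coeff y)) @ \oo --> (expR y : R^o).
Proof. exact: is_cvg_series_exp_coeff. Qed.

Lemma rpd_one : rpd (fun _ _ : X => 1 : R).
Proof.
move=> n x a; rewrite (@Qf_eq _ _ _ (fun p q => (fun _ => 1) p * (fun _ => 1) q)) ?Qf_rank1.
  exact: sqr_ge0.
by move=> p q; rewrite mulr1.
Qed.

Lemma rpd_add (K L : X -> X -> R) : rpd K -> rpd L -> rpd (fun p q => K p q + L p q).
Proof. by move=> HK HL n x a; rewrite Qf_add addr_ge0. Qed.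

Lemma rpd_scale (c : R) (K : X -> X -> R) : 0 <= c -> rpd K -> rpd (fun p q => c * K p q).
Proof. by move=> c0 HK n x a; rewrite Qf_scale mulr_ge0. Qed.

Lemma rpd_pow (k : X -> X -> R) m : rpd k -> symk k -> rpd (fun p q => k p q ^+ m).
Proof.
move=> Hk Sk; elim: m => [|m IH].
  by move=> n x a; rewrite (@Qf_eq _ _ _ (fun _ _ => 1)) ?rpd_one // => p q; rewrite expr0.
move=> n x a; rewrite (@Qf_eq _ _ _ (fun p q => k p q ^+ m * k p q)).
  exact: schur.
by move=> p q; rewrite exprSr.
Qed.

Lemma rpd_expser (k : X -> X -> R) N : rpd k -> symk k ->
  rpd (fun p q => series (exp_coeff (k p q)) N).
Proof.
move=> Hk Sk; elim: N => [|N IH] n x a.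
  by rewrite (@Qf_eq _ _ _ (fun _ _ => 0 * 1)) ?Qf_scale ?mul0r // => p q;
    rewrite /series /= big_geq // mul0r.
rewrite (@Qf_eq _ _ _ (fun p q => series (exp_coeff (k p q)) N + (N`!%:R)^-1 * k p q ^+ N)).
  by apply: rpd_add => //; apply: rpd_scale; [rewrite invr_ge0 ler0n|exact: rpd_pow].
by move=> p q; rewrite /series /= big_nat_recr //= mulrC.
Qed.


Lemma rpd_exp (k : X -> X -> R) : rpd k -> symk k -> rpd (fun p q => expR (k p q)).
Proof.
move=> Hk Sk n x a.
have := Qf_cvg (K := fun p q => expR (k p q)) (S := fun N p q => series (exp_coeff (k p q)) N) (x := x) (a := a)
  (fun p q => @ser_cvg (k p q)).
move/cvgr_to_ge; apply; apply: nearW => N; exact: rpd_expser.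
Qed.
Lemma rpd_mulf (f : X -> R) (K : X -> X -> R) : rpd K -> rpd (fun p q => f p * f q * K p q).
Proof.
move=> HK n x a; rewrite (@Qf_eq _ _ _ (fun p q => K p q * (f p * f q))) ?Qf_mulf //.
by move=> p q; rewrite mulrC.
Qed.

Lemma Qf_left (f : X -> R) n (x : 'I_n -> X) a :
  Qf (fun p q => f p) x a = (\sum_(i < n) a i * f (x i)) * \sum_(j < n) a j.
Proof.
rewrite big_distrl; apply: eq_bigr => i _; rewrite big_distrr.
by apply: eq_bigr => j _ /=; ring.
Qed.

Lemma Qf_right (f : X -> R) n (x : 'I_n -> X) a :
  Qf (fun p q => f q) x a = (\sum_(i < n) a i * f (x i)) * \sum_(j < n) a j.
Proof.
rewrite mulrC big_distrl; apply: eq_bigr => i _; rewrite big_distrr.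
by apply: eq_bigr => j _ /=; ring.
Qed.

Definition negt (h : X -> X -> R) : Prop :=
  (forall x, h x x = 0) /\
  (forall x y, h x y = h y x) /\
  (forall (n : nat) (x : 'I_n -> X) (a : 'I_n -> R),
     \sum_(j < n) a j = 0 -> Qf h x a <= 0).

Lemma k_rpd (h : X -> X -> R) x0 : negt h -> rpd (fun p q => h p x0 + h q x0 - h p q).
Proof.
move=> [h0 [hs hn]] n x a.
set s := \sum_(j < n) a j.
set A := \sum_(i < n) a i * h (x i) x0.
have := hn n.+1 (ext x0 x) (ext (- s) a).
rewrite big_ord_recl ext0.
under eq_bigr do rewrite extS.
rewrite -/s addNr => /(_ erefl).
rewrite Q_ext h0.
have E1 : \sum_(j < n) - s * h x0 (x j) * a j = - s * A.
  by rewrite /A mulr_sumr; apply: eq_bigr => j _; rewrite hs; ring.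
have E2 : \sum_(i < n) a i * h (x i) x0 * - s = - s * A.
  by rewrite /A mulr_sumr; apply: eq_bigr => j _; ring.
rewrite E1 E2 => H.
rewrite (@Qf_eq _ _ _ (fun p q => (h p x0 + h q x0) + (-1) * h p q)); last first.
  by move=> p q; ring.
rewrite Qf_add Qf_scale (@Qf_add _ _ (fun p q => h p x0) (fun p q => h q x0)).
rewrite (Qf_left (fun p => h p x0)) (Qf_right (fun p => h p x0)) -/A -/s.
lra.
Qed.

Lemma schoenberg (h : X -> X -> R) (t : R) : negt h -> 0 <= t ->
  rpd (fun p q => expR (- t * h p q)).
Proof.
move=> Hh t0 [|n] x a; first by rewrite Qf0.
set x0 := x ord0.
pose k := fun p q => h p x0 + h q x0 - h p q.
have Sk : symk k.
  by move: Hh => [_ [hs _]] p q; rewrite /k (hs p q); ring.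
have Hk : rpd (fun p q => t * k p q) by apply: rpd_scale => //; apply: k_rpd.
have := @rpd_mulf (fun p => expR (- t * h p x0)) _ (rpd_exp Hk _) n.+1 x a.
rewrite (@Qf_eq _ _ _ (fun p q => expR (- t * h p q))).
  apply; by move=> p q; rewrite /= Sk.
by move=> p q; rewrite -!expRD /k; congr expR; ring.
Qed.
Local Open Scope complex_scope.
Lemma term_id (z w : R[i]) (c : R) : z^* * c%:C * w =
  (c * (Re z * Re w + Im z * Im w))%:C + 'i * (c * (Re z * Im w - Im z * Re w))%:C.
Proof.
case: z => a b; case: w => a' b'; apply/eqP; rewrite eq_complex /=; apply/andP; split; apply/eqP; ring.
Qed.
Lemma imag0 (u : X -> X -> R) n (x : 'I_n -> X) (al be : 'I_n -> R) : symk u ->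
  \sum_(i < n) \sum_(j < n) u (x i) (x j) * (al i * be j - be i * al j) = 0.
Proof.
move=> Su.
pose F i j := u (x i) (x j) * (al i * be j).
rewrite (eq_bigr (fun i => \sum_(j < n) (F i j - F j i))); last first.
  by move=> i _; apply: eq_bigr => j _; rewrite /F Su; ring.
under eq_bigr do rewrite sumrB.
by rewrite sumrB exchange_big subrr.
Qed.

Lemma pd_of_rpd (u : X -> X -> R) : rpd u -> symk u ->
  forall (n : nat) (x : 'I_n -> X) (z : 'I_n -> R[i]),
    0 <= \sum_(i < n) \sum_(j < n) (z i)^* * (u (x i) (x j))%:C * z j.
Proof.
move=> Hu Su n x z.
under eq_bigr do under eq_bigr do rewrite term_id.
under eq_bigr do rewrite big_split /= -rmorph_sum -mulr_sumr -rmorph_sum.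
rewrite big_split /= -rmorph_sum -mulr_sumr -rmorph_sum.
rewrite imag0 // rmorph0 mulr0 addr0.
rewrite -[X in 0 <= X]/((_ : R)%:C) ler0c.
have -> : \sum_(i < n) \sum_(j < n) u (x i) (x j) * (Re (z i) * Re (z j) + Im (z i) * Im (z j))
  = Qf u x (fun i => Re (z i)) + Qf u x (fun i => Im (z i)).
  rewrite -big_split; apply: eq_bigr => i _; rewrite -big_split; apply: eq_bigr => j _ /=; ring.
by apply: addr_ge0.
Qed.

Lemma nC (w : R[i]) : `|w| = (Re `|w|)%:C.
Proof. by rewrite normc_def. Qed.
Lemma normCR (x : R) : `|x%:C| = `|x|%:C.
Proof. by rewrite normc_def /= expr0n addr0 sqrtr_sqr. Qed.

End Lim.

Local Open Scope complex_scope.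

Lemma negt_ge0 (R : realType) (X : Type) (h : X -> X -> R) :
  negative_type h -> forall x y, 0 <= h x y.
Proof.
move=> [h0 [hs hn]] x y.
have := hn 2%N (ext x (fun _ : 'I_1 => y)) (ext 1 (fun _ => -1)).
rewrite big_ord_recl ext0 big_ord1 extS addrN => /(_ erefl).
have -> : (\sum_(i < 2) \sum_(j < 2) ext 1 (fun=> -1) i *
      h (ext x (fun=> y) i) (ext x (fun=> y) j) * ext 1 (fun=> -1) j)
    = Qf h (ext x (fun _ : 'I_1 => y)) (ext 1 (fun _ => -1)) by [].
rewrite Q_ext Qf1 !big_ord1 h0 h0 (hs y x); lra.
Qed.

Lemma mp1 (R : realType) (X : Type) (d h : X -> X -> R) :
  metrically_proper d (fun x y => (h x y)%:C) ->
  forall r, 0 < r -> exists M, forall x y, d x y <= r -> h x y <= M.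
Proof.
move=> [H1 _] r r0; have [M HM] := H1 r r0; exists M => x y dxy.
have := HM x y dxy; rewrite normCR lecR => h1.
exact: le_trans (ler_norm _) h1.
Qed.

Lemma mp2 (R : realType) (X : Type) (d h : X -> X -> R) :
  (forall x y, 0 <= h x y) ->
  metrically_proper d (fun x y => (h x y)%:C) ->
  forall c, 0 < c -> exists r, 0 < r /\ forall x y, r < d x y -> c < h x y.
Proof.
move=> hge [_ H2] c c0; have [r [r0 Hr]] := H2 c c0; exists r; split => // x y dxy.
by have := Hr x y dxy; rewrite normCR ltcR ger0_norm.
Qed.

Lemma Re_norm_ge0 (R : realType) (w : R[i]) : 0 <= complex.Re `|w|.
Proof. by rewrite normc_def /= sqrtr_ge0. Qed.

Lemma from_neg (R : realType) (X : Type) (d h : X -> X -> R) :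
  negative_type h -> metrically_proper d (fun x y => (h x y)%:C) -> has_pd_approx_unit d.
Proof.
move=> Hn Hp.
have hge := negt_ge0 Hn.
have [h0 [hs hq]] := Hn.
pose t n : R := (n.+1%:R)^-1.
have t0 n : 0 < t n by rewrite invr_gt0 ltr0n.
pose e n x y := expR (- t n * h x y).
have e0 n x y : 0 < e n x y by apply: expR_gt0.
have e1 n x y : e n x y <= 1.
  by rewrite /e expR_le1 mulNr oppr_le0 mulr_ge0 // ltW.
have e1' n x y : 1 - e n x y <= t n * h x y.
  by have := expR_ge1Dx (- t n * h x y); rewrite /e mulNr; lra.
exists nat, (fun m n => (m <= n)%N), (fun n x y => (e n x y)%:C).
split.
  split; first exact: (inhabits 0%N).
  split; first exact: leqnn.
  split; first by move=> i j k; exact: leq_trans.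
  by move=> i j; exists (maxn i j); split; [exact: leq_maxl|exact: leq_maxr].
split.
  move=> n; split.
    split.
      exists 1; move=> x y; by rewrite normCR lecR ger0_norm // ltW.
    move=> eps eps0.
    have cpos : 0 < (t n * eps)^-1 by rewrite invr_gt0 mulr_gt0.
    have [r [r0 Hr]] := mp2 hge Hp cpos.
    exists r; split => // x y dxy; rewrite normCR ltcR ger0_norm; last exact: ltW.
    have H1 := Hr x y dxy.
    have H2 : eps^-1 < t n * h x y.
      have := H1; rewrite -(ltr_pM2l (t0 n)) invfM mulrA divff ?mul1r //.
      exact: lt0r_neq0.
    rewrite /e mulNr expRN -[eps]invrK ltf_pV2 ?posrE ?invr_gt0 ?expR_gt0 //.
    by apply: lt_le_trans H2 _; have := expR_ge1Dx (t n * h x y); lra.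
  move=> m x z; apply: (@pd_of_rpd R X (e n)).
    exact: (@schoenberg R X h (t n) Hn (ltW (t0 n))).
  by move=> p q; rewrite /e hs.
move=> f [[M HM] Hdec] eps eps0.
pose B := `|M| + 1.
have Bf x y : complex.Re `|f x y| <= B.
  have := HM x y; rewrite nC lecR => H; apply: le_trans H _; rewrite /B.
  by have := ler_norm M; lra.
have [r [r0 Hr]] := Hdec eps eps0.
have [Mh HMh] := mp1 Hp r0.
pose C := `|Mh| + 1.
have CB0 : 0 <= C * B / eps.
  apply: divr_ge0; last exact: ltW.
  by apply: mulr_ge0; apply: addr_ge0.
have [N HN] : exists N : nat, C * B / eps < N%:R.
  exists (Num.Def.archi_bound (C * B / eps)). exact: archi_boundP.
exists N => n Nn x y.
have E : (e n x y)%:C * f x y - f x y = (e n x y - 1)%:C * f x y.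
  by rewrite rmorphB rmorph1 mulrBl mul1r.
rewrite E normrM normCR nC -rmorphM lecR.
have ne : `|e n x y - 1| = 1 - e n x y.
  by rewrite distrC ger0_norm // subr_ge0.
rewrite ne.
have Rf0 := Re_norm_ge0 (f x y).
have [dr|dr] := leP (d x y) r.
  have hb : h x y <= C by have := HMh x y dr; have := ler_norm Mh; rewrite /C; lra.
  have tb : t n <= t N.
    by rewrite /t lef_pV2 ?posrE ?ltr0n // ler_nat ltnS.
  have s1 : (1 - e n x y) * complex.Re `|f x y| <= (t n * h x y) * B.
    by apply: ler_pM; [rewrite subr_ge0 | exact: Rf0 | exact: e1' | exact: Bf].
  have s2 : t n * h x y <= t N * C by apply: ler_pM => //; exact: ltW.
  have s3 : (t n * h x y) * B <= (t N * C) * B.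
    by apply: ler_wpM2r => //; rewrite /B addr_ge0.
  apply: (le_trans s1); apply: (le_trans s3).
  have HN' : C * B < N%:R * eps by rewrite -ltr_pdivrMr.
  have HNN : N%:R * eps <= N.+1%:R * eps by apply: ler_wpM2r; [exact: ltW | rewrite ler_nat].
  rewrite /t /= -mulrA mulrC ler_pdivrMr ?ltr0n // mulrC.
  lra.
have := Hr x y dr; rewrite nC ltcR => Hf.
have := e1 n x y; have := e0 n x y; nra.
Qed.

Lemma Re_term (R : realType) (c c' : R) (w : R[i]) :
  complex.Re ((c%:C)^* * w * c'%:C) = c * complex.Re w * c'.
Proof. by case: w => a b /=; ring. Qed.

Lemma pd_re (R : realType) (X : Type) (f : X -> X -> R[i]) :
  positive_definite f -> rpd (fun p q => complex.Re (f p q)).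
Proof.
move=> Hf n x a.
have := Hf n x (fun i => (a i)%:C); rewrite lecE => /andP[_].
rewrite raddf_sum /=; under eq_bigr do rewrite raddf_sum /=.
by under eq_bigr do under eq_bigr do rewrite Re_term.
Qed.

Lemma Qf_swap (R : realType) (X : Type) (K : X -> X -> R) n (x : 'I_n -> X) a :
  Qf (fun p q => K q p) x a = Qf K x a.
Proof.
rewrite /Qf exchange_big; apply: eq_bigr => i _; apply: eq_bigr => j _ /=; ring.
Qed.

Definition gk (R : realType) (X : Type) (v : X -> X -> R[i]) (x y : X) : R :=
  complex.Re (v x x) + complex.Re (v y y) - complex.Re (v x y) - complex.Re (v y x).

Lemma gk_ge0 (R : realType) (X : Type) (v : X -> X -> R[i]) x y :
  positive_definite v -> 0 <= gk v x y.
Proof.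
move=> /pd_re H.
have := H 2%N (ext x (fun _ : 'I_1 => y)) (ext 1 (fun _ => -1)).
rewrite Q_ext Qf1 !big_ord1 /gk; lra.
Qed.

Lemma gk_neg (R : realType) (X : Type) (v : X -> X -> R[i]) :
  positive_definite v -> forall n (x : 'I_n -> X) a, \sum_(j < n) a j = 0 ->
  Qf (gk v) x a <= 0.
Proof.
move=> /pd_re H n x a s0.
rewrite (@Qf_eq _ _ _ (fun p q => (complex.Re (v p p) + complex.Re (v q q)) +
   (-1) * (complex.Re (v p q) + complex.Re (v q p)))); last by move=> p q; rewrite /gk; ring.
rewrite Qf_add Qf_scale Qf_add.
rewrite (@Qf_add _ _ (fun p q => complex.Re (v p q)) (fun p q => complex.Re (v q p))).
rewrite (Qf_left (fun p => complex.Re (v p p))) (Qf_right (fun p => complex.Re (v p p))) s0.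
rewrite (Qf_swap (fun p q => complex.Re (v p q))).
have := H n x a; lra.
Qed.

Lemma Re_le_norm (R : realType) (w : R[i]) : `|complex.Re w| <= complex.Re `|w|.
Proof. by have := normc_ge_Re w; rewrite [X in _ <= X]nC lecR. Qed.

Lemma ReB1 (R : realType) (w : R[i]) c : `|w - 1| <= c%:C ->
  1 - c <= complex.Re w /\ complex.Re w <= 1 + c.
Proof.
rewrite nC lecR => H; have := Re_le_norm (w - 1).
rewrite raddfB /= => H2; have := le_trans H2 H.
rewrite ler_norml => /andP[H4 H5]; split; lra.
Qed.

Lemma ReM (R : realType) (w : R[i]) M : `|w| <= M%:C -> `|complex.Re w| <= M.
Proof. rewrite nC lecR; exact: le_trans (Re_le_norm _). Qed.

Lemma ReL (R : realType) (w : R[i]) c : `|w| < c%:C -> `|complex.Re w| < c.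
Proof. rewrite nC ltcR; exact: le_lt_trans (Re_le_norm _). Qed.

Lemma geo (R : realType) N : \sum_(0 <= n < N) ((2:R) ^+ n)^-1 = 2 - 2 * ((2:R) ^+ N)^-1.
Proof.
elim: N => [|N IH]; first by rewrite big_geq // expr0 invr1; ring.
rewrite big_nat_recr //= IH exprS invfM; field.
by apply: expf_neq0; rewrite pnatr_eq0.
Qed.

Lemma geo_le (R : realType) N : \sum_(0 <= n < N) ((2:R) ^+ n)^-1 <= 2.
Proof.
rewrite geo; have : 0 <= ((2:R) ^+ N)^-1 by rewrite invr_ge0 exprn_ge0.
lra.
Qed.

Definition epsn (R : realType) (n : nat) : R := ((2:R) ^+ n.+2)^-1.

Lemma approx_good (R : realType) (X : Type) (d : X -> X -> R) :
  has_pd_approx_unit d ->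
  exists v : nat -> X -> X -> R[i],
    (forall n, C0_diag d (v n) /\ positive_definite (v n)) /\
    (forall n x y, d x y <= n.+1%:R -> `|v n x y - 1| <= (epsn R n)%:C).
Proof.
move=> [I [le [u [[_ [lerefl _]] [Hu Happ]]]]].
have H : forall n : nat, exists i, forall x y, d x y <= n.+1%:R ->
    `|u i x y - 1| <= (epsn R n)%:C.
  move=> n.
  pose f := fun x y => if d x y <= n.+1%:R then (1 : R[i]) else 0.
  have Cf : C0_diag d f.
    split.
      exists 1; move=> x y; rewrite /f; case: ifP => _.
        by rewrite normr1.
      by rewrite normr0 ler0c ler01.
    move=> eps eps0; exists n.+1%:R; split; first by rewrite ltr0n.
    move=> x y dxy; rewrite /f; case: ifP => [H1|_].
      by move: dxy; rewrite ltNge H1.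
    by rewrite normr0 ltcR.
  have ep : 0 < epsn R n by rewrite invr_gt0 exprn_gt0.
  have [i0 Hi0] := Happ f Cf (epsn R n) ep.
  exists i0; move=> x y dxy; have := Hi0 i0 (lerefl i0) x y.
  by rewrite /f dxy mulr1.
have [sel Hsel] := choice H.
exists (fun n => u (sel n)); split; first by move=> n; exact: Hu.
exact: Hsel.
Qed.

Lemma four_epsn (R : realType) n : 4 * epsn R n = ((2:R) ^+ n)^-1.
Proof. rewrite /epsn !exprS; field; by apply: expf_neq0; rewrite pnatr_eq0. Qed.

Lemma epsn_le (R : realType) n : epsn R n <= 4^-1.
Proof.
have := four_epsn R n; have : ((2:R) ^+ n)^-1 <= 1.
  have H2 : 1 <= (2:R) ^+ n by apply: exprn_ege1; rewrite ler1n.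
  by rewrite invf_le1 // exprn_gt0.
have : 0 <= epsn R n by rewrite invr_ge0 exprn_ge0.
lra.
Qed.

Lemma to_neg (R : realType) (X : Type) (d : X -> X -> R) : is_metric d ->
  has_pd_approx_unit d ->
  exists h : X -> X -> R, negative_type h /\ metrically_proper d (fun x y => (h x y)%:C).
Proof.
move=> [d0 [dxx [ds _]]] Hap.
have dxx0 x : d x x = 0 by apply/dxx.
have [v [Hv Hclose]] := approx_good Hap.
have [M HM] := choice (fun n => (Hv n).1.1).
have Hdec n : exists r, 0 < r /\ forall x y, r < d x y -> `|v n x y| < (2^-1 : R)%:C.
  by apply: (Hv n).1.2; rewrite invr_gt0.
have [rr Hrr] := choice Hdec.
pose g n := gk (v n).
have g0 n x y : 0 <= g n x y by apply: gk_ge0; exact: (Hv n).2.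
have gxx n x : g n x x = 0 by rewrite /g /gk; ring.
have gs n x y : g n x y = g n y x by rewrite /g /gk; ring.
have gup n x y : d x y <= n.+1%:R -> g n x y <= ((2:R)^+n)^-1.
  move=> dxy; rewrite -four_epsn.
  have dn z : d z z <= n.+1%:R by rewrite dxx0.
  have [a1 a2] := ReB1 (Hclose n x x (dn x)).
  have [b1 b2] := ReB1 (Hclose n y y (dn y)).
  have [c1 c2] := ReB1 (Hclose n x y dxy).
  have dyx : d y x <= n.+1%:R by rewrite ds.
  have [e1 e2] := ReB1 (Hclose n y x dyx).
  rewrite /g /gk; lra.
have gbd n x y : g n x y <= 4 * `|M n|.
  have HR z w : `|complex.Re (v n z w)| <= `|M n|.
    exact: le_trans (ReM (HM n z w)) (ler_norm _).
  have := HR x x; have := HR y y; have := HR x y; have := HR y x.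
  rewrite /g /gk !ler_norml => /andP[? ?] /andP[? ?] /andP[? ?] /andP[? ?]; lra.
have glow n x y : rr n < d x y -> 2^-1 <= g n x y.
  move=> dxy.
  have dn z : d z z <= n.+1%:R by rewrite dxx0.
  have [a1 a2] := ReB1 (Hclose n x x (dn x)).
  have [b1 b2] := ReB1 (Hclose n y y (dn y)).
  have dyx : rr n < d y x by rewrite ds.
  have := ReL ((Hrr n).2 x y dxy); have := ReL ((Hrr n).2 y x dyx).
  have := epsn_le R n.
  rewrite /g /gk !ltr_norml => ? /andP[? ?] /andP[? ?]; lra.
pose S N x y := \sum_(0 <= n < N) g n x y.
have S0 N x y : 0 <= S N x y by apply: sumr_ge0 => n _; exact: g0.
have Smono N N' x y : (N <= N')%N -> S N x y <= S N' x y.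
  move=> NN; rewrite /S (big_cat_nat (leq0n N) NN) /= lerDl.
  by apply: sumr_ge0 => n _; exact: g0.
have Sxx N x : S N x x = 0 by rewrite /S big1 // => n _; exact: gxx.
have Ss N x y : S N x y = S N y x by rewrite /S; apply: eq_bigr => n _; exact: gs.
have Sbound K x y : d x y <= K%:R ->
    forall N, S N x y <= \sum_(0 <= n < K) 4 * `|M n| + 2.
  move=> dK N.
  apply: (le_trans (Smono N (maxn N K) x y (leq_maxl _ _))).
  rewrite /S (big_cat_nat (leq0n K) (leq_maxr N K)) /=.
  apply: lerD; first by apply: ler_sum => n _; exact: gbd.
  apply: (@le_trans _ _ (\sum_(K <= n < maxn N K) ((2:R) ^+ n)^-1)).
    apply: ler_sum_nat => n /andP[Kn _]; apply: gup.
    by apply: (le_trans dK); rewrite ler_nat; apply: (leq_trans Kn).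
  apply: (le_trans _ (geo_le R (maxn N K))).
  rewrite (big_cat_nat (leq0n K) (leq_maxr N K)) /= lerDr.
  by apply: sumr_ge0 => n _; rewrite invr_ge0 exprn_ge0.
have dK x y : exists K : nat, d x y <= K%:R.
  by exists (Num.Def.archi_bound (d x y)); apply/ltW/archi_boundP.
pose h x y := sup (range (fun N => S N x y)).
have hsup x y : has_sup (range (fun N => S N x y)).
  split; first by exists (S 0%N x y), 0%N.
  have [K HK] := dK x y.
  exists (\sum_(0 <= n < K) 4 * `|M n| + 2) => z [N _ <-]; exact: Sbound.
have hge x y N : S N x y <= h x y.
  by apply: (sup_upper_bound (hsup x y)); exists N.
have hle x y B : (forall N, S N x y <= B) -> h x y <= B.
  move=> HB; apply: ge_sup; first by exists (S 0%N x y), 0%N.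
  by move=> z [N _ <-].
have h0 x y : 0 <= h x y by apply: le_trans (hge x y 0%N); exact: S0.
exists h; split.
  split.
    move=> x; apply/le_anti/andP; split; last exact: h0.
    by apply: hle => N; rewrite Sxx.
  split.
    move=> x y; rewrite /h; congr sup.
    by rewrite (@funext _ _ (fun N => S N x y) (fun N => S N y x)) // => N; exact: Ss.
  move=> n x a sa.
  change (Qf h x a <= 0).
  have QS N : Qf (S N) x a <= 0.
    elim: N => [|N IH].
      rewrite (@Qf_eq _ _ _ (fun _ _ => 0 * 1)) ?Qf_scale ?mul0r // => p q.
      by rewrite /S big_geq // mul0r.
    rewrite (@Qf_eq _ _ _ (fun p q => S N p q + g N p q)); last first.
      by move=> p q; rewrite /S big_nat_recr.
    rewrite Qf_add; have := gk_neg (Hv N).2 x sa; rewrite -/(g N); lra.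
  pose T := \sum_(i < n) \sum_(j < n) `|a i| * `|a j|.
  have T0 : 0 <= T.
    by apply: sumr_ge0 => i _; apply: sumr_ge0 => j _; apply: mulr_ge0.
  have key : forall eps, 0 < eps -> Qf h x a <= eps * T.
    move=> eps eps0.
    have Hij : forall p : 'I_n * 'I_n,
        exists N, h (x p.1) (x p.2) - eps < S N (x p.1) (x p.2).
      move=> p; have [z [N _ <-] Hz] := sup_adherent eps0 (hsup (x p.1) (x p.2)).
      by exists N.
    have [Nf HNf] := choice Hij.
    pose NN := \max_(p : 'I_n * 'I_n) Nf p.
    have close : forall i j, 0 <= h (x i) (x j) - S NN (x i) (x j) /\ h (x i) (x j) - S NN (x i) (x j) <= eps.
      move=> i j; split; first by rewrite subr_ge0.
      have := HNf (i, j); have := Smono (Nf (i, j)) NN (x i) (x j) (leq_bigmax (i, j)).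
      rewrite /=; lra.
    rewrite (@Qf_eq _ _ _ (fun p q => S NN p q + (h p q - S NN p q))); last first.
      by move=> p q; ring.
    rewrite Qf_add.
    have Q2 : Qf (fun p q => h p q - S NN p q) x a <= eps * T.
      rewrite /T mulr_sumr; apply: ler_sum => i _; rewrite mulr_sumr; apply: ler_sum => j _.
      have [c1 c2] := close i j.
      apply: le_trans (ler_norm _) _; rewrite !normrM (ger0_norm c1).
      rewrite mulrAC mulrC; apply: ler_wpM2r => //.
      by apply: mulr_ge0.
    have := QS NN; lra.
  rewrite leNgt; apply/negP => Hpos.
  have T1 : 0 < T + 1 by rewrite ltr_wpDl.
  have := key (Qf h x a / (T + 1)) (divr_gt0 Hpos T1).
  rewrite mulrAC ler_pdivlMr // mulrDr mulr1; lra.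
split.
  move=> r r0.
  have [K HK] : exists K : nat, r <= K%:R.
    by exists (Num.Def.archi_bound r); apply/ltW/archi_boundP/ltW.
  exists (\sum_(0 <= n < K) 4 * `|M n| + 2) => x y dxy.
  rewrite normCR lecR ger0_norm //; apply: hle => N; apply: Sbound.
  exact: le_trans dxy HK.
move=> c c0.
have [N HN] : exists N : nat, 2 * c < N%:R.
  exists (Num.Def.archi_bound (2 * c)); apply/archi_boundP.
  by rewrite mulr_ge0 // ltW.
have rr0 n : 0 < rr n by have [] := Hrr n.
exists (1 + \sum_(n < N) rr n); split.
  by rewrite ltr_wpDr // sumr_ge0 // => n _; apply: ltW.
move=> x y dxy.
rewrite normCR ltcR ger0_norm //.
have SN : N%:R / 2 <= S N x y.
  rewrite /S big_mkord.
  apply: (@le_trans _ _ (\sum_(n < N) (2 : R)^-1)).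
    rewrite sumr_const card_ord -mulr_natr; lra.
  apply: ler_sum => n _; apply: glow.
  apply: le_lt_trans dxy.
  rewrite (bigD1 n) //= addrCA lerDl.
  apply: addr_ge0 => //.
  by apply: sumr_ge0 => m _; apply: ltW.
have := hge x y N; lra.
Qed.

Unset Implicit Arguments.

Theorem theorem2p1 (R : realType) (X : Type) (d : X -> X -> R) (hd : is_metric d) :
  has_pd_approx_unit d <->
  exists h : X -> X -> R,
    negative_type h /\ metrically_proper d (fun x y => (h x y)%:C%C).
Proof.
split; first exact: to_neg hd.
by move=> [h [Hn Hp]]; exact: from_neg Hn Hp.
Qed.
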